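(* Under the hypotheses and notation of the tortuosity integral representation (let $\Theta_1,G,F,\eta,\rho_f,\phi,\nu,K,K_0,\alpha_\infty,T,a,\sigma$ be as there), let $d\lambda(\Theta):=\Theta\,dG(\Theta)$ on $[0,\Theta_1]$ and define the moments $\mu_k(d\lambda):=\int_0^{\Theta_1}\Theta^k\,d\lambda(\Theta)$, $\mu_k(d\sigma):=\int_0^{\Theta_1}t^k\,d\sigma(t)$ for $k\ge0$. Then (i) $\mu_0(d\lambda)=\frac{FK_0}{\nu}=\frac{\alpha_\infty K_0}{\phi\nu}$; (ii) for every $p\ge1$, $\mu_p(d\lambda)=\frac{\mu_0(d\lambda)}{\alpha_\infty}\sum_{k+j=p-1}\mu_k(d\sigma)\,\mu_j(d\lambda)$ (sum over $k,j\ge0$); (iii) in particular $\mu_0(d\sigma)=\frac{\alpha_\infty\,\mu_1(d\lambda)}{\mu_0(d\lambda)^2}=\frac{\nu^2\phi}{K_0^2F}\mu_1(d\lambda)$, equivalently $\alpha_\infty=\frac{\mu_0(d\sigma)\,\mu_0(d\lambda)^2}{\mu_1(d\lambda)}$.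
   Context: Standing hypotheses: $\Theta_1>0$; $G$ nondecreasing, right-continuous, $G=0$ on $(-\infty,0]$, $G=1$ on $[\Theta_1,\infty)$; $(F/\nu)K(\omega)=\int_0^{\Theta_1}\Theta\,dG(\Theta)/(1-i\omega\Theta)$; $K_0=K(0)$; $\alpha_\infty=\phi F$; $T(\omega)=\frac{i\eta\phi}{\omega\rho_f}K(\omega)^{-1}$; $a\ge0$ and the positive measure $\sigma$ on $[0,\Theta_1]$ are those for which $T(\omega)=a\,i/\omega+\int_0^{\Theta_1}d\sigma(t)/(1-i\omega t)$. *)

(* Defs.v *)
From Stdlib Require Import Reals Lra List ClassicalEpsilon.
Open Scope R_scope.

Record C := mkC { Re : R ; Im : R }.
Definition RtoC (x : R) : C := mkC x 0.
Definition Ci : C := mkC 0 1.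
Definition Cadd (z w : C) : C := mkC (Re z + Re w) (Im z + Im w).
Definition Cmul (z w : C) : C :=
  mkC (Re z * Re w - Im z * Im w) (Re z * Im w + Im z * Re w).
Definition Cinv (z : C) : C :=
  mkC (Re z / (Re z ^ 2 + Im z ^ 2)) (- Im z / (Re z ^ 2 + Im z ^ 2)).
Definition Cdiv (z w : C) : C := Cmul z (Cinv w).

(* A tagged partition of [x0,b] is a list of (tag, next point). *)
Fixpoint rs_sum (f g : R -> R) (x0 : R) (l : list (R * R)) : R :=
  match l with
  | nil => 0
  | (t, x1) :: l' => f t * (g x1 - g x0) + rs_sum f g x1 l'
  end.

Fixpoint tagged_part (x0 : R) (l : list (R * R)) (b d : R) : Prop :=
  match l with
  | nil => x0 = b
  | (t, x1) :: l' => x0 < x1 /\ x0 <= t <= x1 /\ x1 - x0 < d /\ tagged_part x1 l' b d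
  end.

Definition is_RS (f g : R -> R) (a b I : R) : Prop :=
  forall eps, 0 < eps -> exists d, 0 < d /\
    forall l, tagged_part a l b d -> Rabs (rs_sum f g a l - I) < eps.

(* the value of the integral (classical choice; 0 if it does not exist) *)
Definition RSint (f g : R -> R) (a b : R) : R :=
  epsilon (inhabits 0) (fun I => is_RS f g a b I).

(* Integral over [0,b] w.r.t. the positive measure whose distribution
   function D vanishes on (-oo,0) (so atoms at 0 are counted):
   realized as the RS integral over [-1,b]. *)
Definition mint (f D : R -> R) (b : R) : R := RSint f D (-1) b.

Definition Cmint (f : R -> C) (D : R -> R) (b : R) : C :=
  mkC (mint (fun t => Re (f t)) D b) (mint (fun t => Im (f t)) D b).

Definition nondecreasing (g : R -> R) : Prop := forall x y, x <= y -> g x <= g y.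
Definition right_continuous (g : R -> R) : Prop :=
  forall x eps, 0 < eps -> exists d, 0 < d /\ forall y, x <= y < x + d -> Rabs (g y - g x) < eps.

Definition one_m_iwt (w t : R) : C := mkC 1 (- (w * t)).

Definition Kfun (nu F Th1 : R) (G : R -> R) (w : R) : C :=
  Cmul (RtoC (nu / F)) (Cmint (fun th => Cdiv (RtoC th) (one_m_iwt w th)) G Th1).

Definition Tfun (eta phi rhof nu F Th1 : R) (G : R -> R) (w : R) : C :=
  Cmul (Cmul Ci (RtoC (eta * phi / (w * rhof)))) (Cinv (Kfun nu F Th1 G w)).

(* moments: dlambda = Th dG, so mu_k(dlambda) = int Th^(k+1) dG *)
Definition mu_lambda (Th1 : R) (G : R -> R) (k : nat) : R :=
  mint (fun th => th ^ k * th) G Th1.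
Definition mu_sigma (Th1 : R) (S : R -> R) (k : nat) : R :=
  mint (fun t => t ^ k) S Th1.

(* Main.v *)
Require Import Defs.
From Stdlib Require Import Reals Lra Lia List Rtopology ClassicalEpsilon FunctionalExtensionality.
Open Scope R_scope.


Lemma tp_le : forall l x0 b d, tagged_part x0 l b d -> x0 <= b.
Proof.
  induction l as [|[t x1] l IH]; simpl; intros x0 b d H.
  - lra.
  - destruct H as (H1 & H2 & H3 & H4). specialize (IH _ _ _ H4). lra.
Qed.

Lemma tp_mono : forall l x0 b d d', d <= d' -> tagged_part x0 l b d -> tagged_part x0 l b d'.
Proof.
  induction l as [|[t x1] l IH]; simpl; intros x0 b d d' Hd H; auto.
  destruct H as (H1 & H2 & H3 & H4). repeat split; try lra. eapply IH; eauto.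
Qed.

Fixpoint upart (x h : R) (n : nat) : list (R*R) :=
  match n with O => nil | S n' => (x, x+h) :: upart (x+h) h n' end.

Lemma upart_tp : forall n x h d, 0 < h -> h < d -> tagged_part x (upart x h n) (x + INR n * h) d.
Proof.
  induction n; intros x h d Hh Hd.
  - simpl. ring.
  - cbn [upart tagged_part]. repeat split; try lra.
    replace (x + INR (S n) * h) with ((x+h) + INR n * h) by (rewrite S_INR; ring).
    apply IHn; auto.
Qed.

Lemma part_exists : forall A B d, A < B -> 0 < d -> exists l, tagged_part A l B d.
Proof.
  intros A B d HAB Hd.
  destruct (archimed_cor1 (d/(B-A))) as [N [HN1 HN2]].
  { apply Rdiv_lt_0_compat; lra. }
  assert (HN: 0 < INR N) by (apply lt_0_INR; lia).
  exists (upart A ((B-A)/INR N) N).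
  assert (H1 : 0 < (B-A)/INR N) by (apply Rdiv_lt_0_compat; lra).
  assert (H2 : (B-A)/INR N < d).
  { replace d with ((B-A) * (d/(B-A))) by (field; lra).
    unfold Rdiv at 1. apply Rmult_lt_compat_l; lra. }
  pose proof (upart_tp N A ((B-A)/INR N) d H1 H2) as P.
  replace (A + INR N * ((B - A) / INR N)) with B in P by (field; lra). exact P.
Qed.

Lemma RS_unique : forall f g A B I J, A < B -> is_RS f g A B I -> is_RS f g A B J -> I = J.
Proof.
  intros f g A B I J HAB HI HJ.
  destruct (Req_dec I J) as [E|NE]; auto. exfalso.
  assert (He : 0 < Rabs (I - J) / 2) by (apply Rdiv_lt_0_compat; [apply Rabs_pos_lt; lra|lra]).
  destruct (HI _ He) as [d1 [Hd1 P1]]; destruct (HJ _ He) as [d2 [Hd2 P2]].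
  destruct (part_exists A B (Rmin d1 d2)) as [l Hl]; auto.
  { apply Rmin_pos; auto. }
  specialize (P1 l (tp_mono _ _ _ _ _ (Rmin_l d1 d2) Hl)).
  specialize (P2 l (tp_mono _ _ _ _ _ (Rmin_r d1 d2) Hl)).
  revert P1 P2. split_Rabs; lra.
Qed.

Lemma rs_sum_lin : forall f h g al be l x0,
  rs_sum (fun x => al * f x + be * h x) g x0 l = al * rs_sum f g x0 l + be * rs_sum h g x0 l.
Proof.
  intros f h g al be l; induction l as [|[t x1] l IH]; simpl; intros x0; [ring|].
  rewrite IH; ring.
Qed.

Lemma rs_sum_0 : forall g l x0, rs_sum (fun _ => 0) g x0 l = 0.
Proof. intros g l; induction l as [|[t x1] l IH]; simpl; intros x0; [ring|rewrite IH; ring]. Qed.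

Lemma is_RS_0 : forall g A B, is_RS (fun _ => 0) g A B 0.
Proof.
  intros g A B eps He. exists 1; split; [lra|]. intros l _. rewrite rs_sum_0.
  rewrite Rminus_0_r, Rabs_R0; auto.
Qed.

Lemma is_RS_lin : forall f h g A B I J al be, is_RS f g A B I -> is_RS h g A B J ->
  is_RS (fun x => al * f x + be * h x) g A B (al * I + be * J).
Proof.
  intros f h g A B I J al be HI HJ eps He.
  set (K := Rabs al + Rabs be + 1).
  assert (HK : 0 < K) by (unfold K; pose proof (Rabs_pos al); pose proof (Rabs_pos be); lra).
  assert (He' : 0 < eps / K) by (apply Rdiv_lt_0_compat; auto).
  destruct (HI _ He') as [d1 [Hd1 P1]]; destruct (HJ _ He') as [d2 [Hd2 P2]].
  exists (Rmin d1 d2); split; [apply Rmin_pos; auto|].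
  intros l Hl.
  specialize (P1 l (tp_mono _ _ _ _ _ (Rmin_l d1 d2) Hl)).
  specialize (P2 l (tp_mono _ _ _ _ _ (Rmin_r d1 d2) Hl)).
  rewrite rs_sum_lin.
  replace (al * rs_sum f g A l + be * rs_sum h g A l - (al * I + be * J))
    with (al * (rs_sum f g A l - I) + be * (rs_sum h g A l - J)) by ring.
  eapply Rle_lt_trans; [apply Rabs_triang|]. rewrite !Rabs_mult.
  assert (E1 : Rabs al * Rabs (rs_sum f g A l - I) <= Rabs al * (eps / K))
    by (apply Rmult_le_compat_l; [apply Rabs_pos|lra]).
  assert (E2 : Rabs be * Rabs (rs_sum h g A l - J) <= Rabs be * (eps / K))
    by (apply Rmult_le_compat_l; [apply Rabs_pos|lra]).
  assert (E3 : (Rabs al + Rabs be + 1) * (eps / K) = eps) by (fold K; field; lra).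
  set (e := eps / K) in *. rewrite !Rmult_plus_distr_r in E3. lra.
Qed.

Lemma rs_sum_bound : forall f g M b d, nondecreasing g -> forall l x0, tagged_part x0 l b d ->
  (forall t, x0 <= t <= b -> Rabs (f t) <= M) -> Rabs (rs_sum f g x0 l) <= M * (g b - g x0).
Proof.
  intros f g M b d Hg l; induction l as [|[t x1] l IH]; simpl; intros x0 Hl Hf.
  - subst. rewrite Rabs_R0. lra.
  - destruct Hl as (H1 & H2 & H3 & H4).
    pose proof (tp_le _ _ _ _ H4).
    assert (IH' := IH x1 H4 (fun s Hs => Hf s ltac:(lra))).
    eapply Rle_trans; [apply Rabs_triang|]. rewrite Rabs_mult.
    assert (Hd : 0 <= g x1 - g x0) by (pose proof (Hg x0 x1); lra).
    rewrite (Rabs_pos_eq (g x1 - g x0)) by lra.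
    assert (Rabs (f t) * (g x1 - g x0) <= M * (g x1 - g x0))
      by (apply Rmult_le_compat_r; [lra| apply Hf; lra]).
    lra.
Qed.

Lemma RS_bound : forall f g A B I M, A < B -> nondecreasing g -> is_RS f g A B I ->
  (forall t, A <= t <= B -> Rabs (f t) <= M) -> Rabs I <= M * (g B - g A).
Proof.
  intros f g A B I M HAB Hg HI Hf.
  apply Rle_plus_epsilon. intros eps He.
  destruct (HI _ He) as [d [Hd P]].
  destruct (part_exists A B d HAB Hd) as [l Hl].
  specialize (P l Hl).
  pose proof (rs_sum_bound f g M B d Hg l A Hl Hf).
  revert P H. split_Rabs; lra.
Qed.

Fixpoint lpart (x0 : R) (l : list (R*R)) (b d A B : R) : Prop :=
  match l with
  | nil => x0 = b
  | (t, x1) :: l' => x0 < x1 /\ x1 - d < t < x0 + d /\ A <= t <= B /\ lpart x1 l' b d A B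
  end.

Lemma lp_le : forall l x0 b d A B, lpart x0 l b d A B -> x0 <= b.
Proof.
  induction l as [|[t x1] l IH]; simpl; intros x0 b d A B H.
  - lra.
  - destruct H as (H1 & H2 & H3 & H4). specialize (IH _ _ _ _ _ H4). lra.
Qed.

Lemma tp_lp : forall l x0 b d A B, tagged_part x0 l b d -> A <= x0 -> b <= B -> lpart x0 l b d A B.
Proof.
  induction l as [|[t x1] l IH]; simpl; intros x0 b d A B H HA HB; auto.
  destruct H as (H1 & H2 & H3 & H4). pose proof (tp_le _ _ _ _ H4).
  repeat split; try lra. apply IH; auto; lra.
Qed.

Lemma lp_cauchy (f g : R -> R) A B b d eps :
  nondecreasing g -> b <= B ->
  (forall x y, A <= x <= B -> A <= y <= B -> Rabs (x - y) < d -> Rabs (f x - f y) < eps) ->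
  forall n P Q x0, (length P + length Q <= n)%nat -> A <= x0 ->
  lpart x0 P b d A B -> lpart x0 Q b d A B ->
  Rabs (rs_sum f g x0 P - rs_sum f g x0 Q) <= 2 * eps * (g b - g x0).
Proof.
  intros Hg HbB Huc n. induction n as [|n IH]; intros P Q x0 Hlen HA HP HQ.
  - destruct P; [|simpl in Hlen; lia]. destruct Q; [|simpl in Hlen; lia].
    simpl in *. subst. rewrite Rminus_0_r, Rabs_R0. lra.
  - destruct P as [|[t x1] P']; destruct Q as [|[u y1] Q'].
    + simpl in *. subst. rewrite Rminus_0_r, Rabs_R0. lra.
    + simpl in HP, HQ. destruct HQ as (H1 & H2 & H3 & H4). pose proof (lp_le _ _ _ _ _ _ H4). lra.
    + simpl in HP, HQ. destruct HP as (H1 & H2 & H3 & H4). pose proof (lp_le _ _ _ _ _ _ H4). lra.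
    + pose proof (lp_le _ _ _ _ _ _ HP) as Hx0b.
      simpl in HP, HQ. destruct HP as (H1 & H2 & H3 & H4). destruct HQ as (G1 & G2 & G3 & G4).
      pose proof (lp_le _ _ _ _ _ _ H4). pose proof (lp_le _ _ _ _ _ _ G4).
      assert (Hft : Rabs (f t - f x0) < eps) by (apply Huc; try lra; split_Rabs; lra).
      assert (Hfu : Rabs (f x0 - f u) < eps) by (apply Huc; try lra; split_Rabs; lra).
      assert (Htu : Rabs (f t - f u) <= 2 * eps).
      { replace (f t - f u) with ((f t - f x0) + (f x0 - f u)) by ring.
        eapply Rle_trans; [apply Rabs_triang|]. lra. }
      assert (Hmul : forall z, 0 <= z -> Rabs ((f t - f u) * z) <= 2 * eps * z).
      { intros z Hz. rewrite Rabs_mult, (Rabs_pos_eq z Hz). apply Rmult_le_compat_r; auto. }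
      simpl length in Hlen. cbn [rs_sum].
      destruct (Rtotal_order x1 y1) as [Hlt | [Heq | Hgt]].
      * assert (L : lpart x1 ((u,y1)::Q') b d A B) by (simpl; repeat split; try lra; auto).
        specialize (IH P' ((u,y1)::Q') x1 ltac:(simpl; lia) ltac:(lra) H4 L).
        cbn [rs_sum] in IH.
        specialize (Hmul (g x1 - g x0) ltac:(pose proof (Hg x0 x1); lra)).
        replace (f t * (g x1 - g x0) + rs_sum f g x1 P' - (f u * (g y1 - g x0) + rs_sum f g y1 Q'))
          with ((f t - f u) * (g x1 - g x0) + (rs_sum f g x1 P' - (f u * (g y1 - g x1) + rs_sum f g y1 Q'))) by ring.
        eapply Rle_trans; [apply Rabs_triang|]. lra.
      * subst y1.
        specialize (IH P' Q' x1 ltac:(lia) ltac:(lra) H4 G4).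
        specialize (Hmul (g x1 - g x0) ltac:(pose proof (Hg x0 x1); lra)).
        replace (f t * (g x1 - g x0) + rs_sum f g x1 P' - (f u * (g x1 - g x0) + rs_sum f g x1 Q'))
          with ((f t - f u) * (g x1 - g x0) + (rs_sum f g x1 P' - rs_sum f g x1 Q')) by ring.
        eapply Rle_trans; [apply Rabs_triang|]. lra.
      * assert (L : lpart y1 ((t,x1)::P') b d A B) by (simpl; repeat split; try lra; auto).
        specialize (IH ((t,x1)::P') Q' y1 ltac:(simpl; lia) ltac:(lra) L G4).
        cbn [rs_sum] in IH.
        specialize (Hmul (g y1 - g x0) ltac:(pose proof (Hg x0 y1); lra)).
        replace (f t * (g x1 - g x0) + rs_sum f g x1 P' - (f u * (g y1 - g x0) + rs_sum f g y1 Q'))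
          with ((f t - f u) * (g y1 - g x0) + (f t * (g x1 - g y1) + rs_sum f g x1 P' - rs_sum f g y1 Q')) by ring.
        eapply Rle_trans; [apply Rabs_triang|]. lra.
Qed.

Lemma small_inv : forall C eps, 0 <= C -> 0 < eps -> exists N:nat, C / (INR N + 1) < eps.
Proof.
  intros C eps HC He.
  destruct (archimed_cor1 (eps/(C+1))) as [N [H1 H2]].
  { apply Rdiv_lt_0_compat; lra. }
  assert (HN: 0 < INR N) by (apply lt_0_INR; lia).
  exists N.
  assert (h : INR N * (C+1) * / INR N < INR N * (C+1) * (eps/(C+1)))
    by (apply Rmult_lt_compat_l; [nra|auto]).
  replace (INR N * (C+1) * / INR N) with (C+1) in h by (field; lra).
  replace (INR N * (C+1) * (eps/(C+1))) with (INR N * eps) in h by (field; lra).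
  apply (Rmult_lt_reg_r (INR N + 1)); [lra|].
  replace (C / (INR N + 1) * (INR N + 1)) with C by (field; lra). nra.
Qed.

Lemma unif_cont f A B : (forall x, A <= x <= B -> continuity_pt f x) ->
  forall eps, 0 < eps -> exists d, 0 < d /\ forall x y, A <= x <= B -> A <= y <= B -> Rabs (x-y) < d -> Rabs (f x - f y) < eps.
Proof.
  intros Hc eps He.
  destruct (Heine f (fun c => A <= c <= B) (compact_P3 A B) Hc (mkposreal eps He)) as [dl Hdl].
  exists dl; split; [apply cond_pos|]. intros; apply Hdl; auto.
Qed.

Fixpoint Dmin (D : nat -> R) (n : nat) : R :=
  match n with O => D O | S k => Rmin (D (S k)) (Dmin D k) end.

Lemma Dmin_pos : forall D, (forall n, 0 < D n) -> forall n, 0 < Dmin D n.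
Proof. intros D H n; induction n; simpl; auto. apply Rmin_pos; auto. Qed.

Lemma Dmin_le : forall D n, Dmin D n <= D n.
Proof. intros D n; destruct n; simpl; [lra| apply Rmin_l]. Qed.

Lemma Dmin_mono : forall D n m, (n <= m)%nat -> Dmin D m <= Dmin D n.
Proof.
  intros D n m H; induction H; [lra|]. simpl. eapply Rle_trans; [apply Rmin_r|auto].
Qed.

Lemma RS_exists f g A B : A < B -> nondecreasing g -> (forall x, A <= x <= B -> continuity_pt f x) ->
  exists I, is_RS f g A B I.
Proof.
  intros HAB Hg Hc.
  set (Dg := g B - g A).
  assert (HDg : 0 <= Dg) by (unfold Dg; pose proof (Hg A B); lra).
  assert (HD : forall n:nat, exists d, 0 < d /\ forall x y, A <= x <= B -> A <= y <= B -> Rabs (x-y) < d -> Rabs (f x - f y) < / (INR n + 1)).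
  { intro n. apply unif_cont; auto. apply Rinv_0_lt_compat. pose proof (pos_INR n); lra. }
  set (D := fun n => proj1_sig (constructive_indefinite_description _ (HD n))).
  assert (HDp : forall n, 0 < D n /\ forall x y, A <= x <= B -> A <= y <= B -> Rabs (x-y) < D n -> Rabs (f x - f y) < / (INR n + 1))
    by (intro n; exact (proj2_sig (constructive_indefinite_description _ (HD n)))).
  assert (HP : forall n, exists l, tagged_part A l B (Dmin D n)).
  { intro n. apply part_exists; auto. apply Dmin_pos. intro k; apply HDp. }
  set (P := fun n => proj1_sig (constructive_indefinite_description _ (HP n))).
  assert (HPp : forall n, tagged_part A (P n) B (Dmin D n))
    by (intro n; exact (proj2_sig (constructive_indefinite_description _ (HP n)))).
  set (s := fun n => rs_sum f g A (P n)).
  assert (key : forall n l, tagged_part A l B (Dmin D n) -> forall m, (n <= m)%nat ->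
            Rabs (rs_sum f g A l - s m) <= 2 * / (INR n + 1) * Dg).
  { intros n l Hl m Hm. unfold s, Dg.
    apply (lp_cauchy f g A B B (D n) (/ (INR n + 1)) Hg (Rle_refl _) (proj2 (HDp n)) (length l + length (P m))); auto; try lra.
    - apply tp_lp; try lra. eapply tp_mono; [|exact Hl]. apply Dmin_le.
    - apply tp_lp; try lra. eapply tp_mono; [|exact (HPp m)].
      eapply Rle_trans; [apply Dmin_mono; exact Hm| apply Dmin_le]. }
  assert (Hcc : Cauchy_crit s).
  { intros eps He. destruct (small_inv (4 * Dg) eps) as [N HN]; try lra.
    exists N. intros n m Hn Hm. unfold Rdist.
    pose proof (key N (P n) (tp_mono _ _ _ _ _ (Dmin_mono D N n Hn) (HPp n)) m Hm) as K2.
    fold (s n) in K2.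
    replace (4 * Dg / (INR N + 1)) with (2 * 2 * / (INR N + 1) * Dg) in HN by (field; pose proof (pos_INR N); lra).
    assert (0 <= 2 * / (INR N + 1) * Dg).
    { apply Rmult_le_pos; [|auto]. apply Rmult_le_pos; [lra|]. left; apply Rinv_0_lt_compat. pose proof (pos_INR N); lra. }
    lra. }
  destruct (R_complete s Hcc) as [I HI].
  exists I. intros eps He.
  destruct (small_inv (4 * Dg) eps) as [n Hn]; try lra.
  exists (Dmin D n). split; [apply Dmin_pos; intro; apply HDp|].
  intros l Hl.
  destruct (HI (eps/2) ltac:(lra)) as [N HN].
  set (m := max n N).
  specialize (HN m ltac:(unfold m; lia)). unfold Rdist in HN.
  specialize (key n l Hl m ltac:(unfold m; lia)).
  replace (4 * Dg / (INR n + 1)) with (2 * 2 * / (INR n + 1) * Dg) in Hn by (field; pose proof (pos_INR n); lra).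
  replace (rs_sum f g A l - I) with ((rs_sum f g A l - s m) + (s m - I)) by ring.
  eapply Rle_lt_trans; [apply Rabs_triang|]. lra.
Qed.

Lemma mint_eq f D b I : -1 < b -> is_RS f D (-1) b I -> mint f D b = I.
Proof.
  intros Hb HI. unfold mint, RSint.
  apply (RS_unique f D (-1) b); auto.
  apply epsilon_spec. exists I; auto.
Qed.

Lemma mint_spec f D b : -1 < b -> nondecreasing D -> continuity f -> is_RS f D (-1) b (mint f D b).
Proof.
  intros Hb HD Hf. destruct (RS_exists f D (-1) b Hb HD (fun x _ => Hf x)) as [I HI].
  rewrite (mint_eq f D b I); auto.
Qed.

Lemma mint_ext f h D b : (forall x, f x = h x) -> mint f D b = mint h D b.
Proof. intros H. f_equal. apply functional_extensionality; auto. Qed.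

Lemma mint_lin f h D b al be : -1 < b -> nondecreasing D -> continuity f -> continuity h ->
  mint (fun x => al * f x + be * h x) D b = al * mint f D b + be * mint h D b.
Proof.
  intros. apply mint_eq; auto. apply is_RS_lin; apply mint_spec; auto.
Qed.

Lemma mint_scal f D b c : -1 < b -> nondecreasing D -> continuity f ->
  mint (fun x => c * f x) D b = c * mint f D b.
Proof.
  intros. rewrite (mint_ext _ (fun x => c * f x + 0 * f x)) by (intro; ring).
  rewrite mint_lin; auto. ring.
Qed.

Lemma mint_0 D b : -1 < b -> mint (fun _ => 0) D b = 0.
Proof. intros. apply mint_eq; auto. apply is_RS_0. Qed.

Lemma mint_bound f D b M : -1 < b -> nondecreasing D -> continuity f ->
  (forall t, -1 <= t <= b -> Rabs (f t) <= M) -> Rabs (mint f D b) <= M * (D b - D (-1)).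
Proof. intros. eapply RS_bound; eauto. apply mint_spec; auto. Qed.

Lemma c_const c : continuity (fun _ => c).
Proof. apply continuity_const. intros x y; auto. Qed.
Lemma c_id : continuity (fun x => x).
Proof. exact (derivable_continuous _ derivable_id). Qed.
Lemma c_pow n : continuity (fun x => x ^ n).
Proof. exact (derivable_continuous _ (derivable_pow n)). Qed.
Lemma c_mul f h : continuity f -> continuity h -> continuity (fun x => f x * h x).
Proof. exact (continuity_mult f h). Qed.
Lemma c_plus f h : continuity f -> continuity h -> continuity (fun x => f x + h x).
Proof. exact (continuity_plus f h). Qed.
Lemma c_div f h : continuity f -> continuity h -> (forall x, h x <> 0) -> continuity (fun x => f x / h x).
Proof. exact (continuity_div f h). Qed.

Definition Den (w t : R) := 1 + w * w * (t * t).
Lemma Den_ge1 w t : 1 <= Den w t.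
Proof. unfold Den. assert (0 <= w*w) by nra. assert (0 <= t*t) by nra. nra. Qed.
Lemma Den_nz w t : Den w t <> 0.
Proof. pose proof (Den_ge1 w t); lra. Qed.
Lemma c_Den w : continuity (fun t => Den w t).
Proof. unfold Den. apply c_plus; [apply c_const|]. apply c_mul; [apply c_const|]. apply c_mul; apply c_id. Qed.

Definition Xr (Th1 : R) (D p : R -> R) (w : R) := mint (fun t => p t / Den w t) D Th1.
Definition Xi (Th1 : R) (D p : R -> R) (w : R) := mint (fun t => p t * (w * t) / Den w t) D Th1.

Lemma c_r p w : continuity p -> continuity (fun t => p t / Den w t).
Proof. intros. apply c_div; auto. apply c_Den. intro; apply Den_nz. Qed.
Lemma c_i p w : continuity p -> continuity (fun t => p t * (w * t) / Den w t).
Proof. intros. apply c_div; [|apply c_Den| intro; apply Den_nz].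
  apply c_mul; auto. apply c_mul; [apply c_const|apply c_id]. Qed.
Lemma c_pt p : continuity p -> continuity (fun t => p t * t).
Proof. intros; apply c_mul; auto; apply c_id. Qed.

Lemma Xi_id Th1 D p w : 0 < Th1 -> nondecreasing D -> continuity p ->
  Xi Th1 D p w = w * Xr Th1 D (fun t => p t * t) w.
Proof.
  intros. unfold Xi, Xr. rewrite <- mint_scal; try lra; auto.
  - apply mint_ext. intro x. field. apply Den_nz.
  - apply c_r, c_pt; auto.
Qed.

Lemma Xr_id Th1 D p w : 0 < Th1 -> nondecreasing D -> continuity p ->
  Xr Th1 D p w = mint p D Th1 - w * Xi Th1 D (fun t => p t * t) w.
Proof.
  intros. unfold Xi, Xr.
  replace (mint p D Th1 - w * mint (fun t => p t * t * (w * t) / Den w t) D Th1)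
    with (1 * mint p D Th1 + (- w) * mint (fun t => p t * t * (w * t) / Den w t) D Th1) by ring.
  rewrite <- mint_lin; try lra; auto.
  - apply mint_ext. intro x. unfold Den. field. fold (Den w x). apply Den_nz.
  - apply c_i, c_pt; auto.
Qed.

Lemma Xr_bnd Th1 D p M : 0 < Th1 -> nondecreasing D -> continuity p ->
  (forall t, -1 <= t <= Th1 -> Rabs (p t) <= M) ->
  forall w, Rabs (Xr Th1 D p w) <= M * (D Th1 - D (-1)).
Proof.
  intros HT HD Hp HM w. unfold Xr. apply mint_bound; try lra; auto.
  - apply c_r; auto.
  - intros t Ht. specialize (HM t Ht). pose proof (Den_ge1 w t).
    set (y := p t / Den w t). assert (E : p t = y * Den w t) by (unfold y; field; apply Den_nz).
    rewrite E in HM. revert HM. split_Rabs; nra.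
Qed.

Lemma Xi_bnd Th1 D p M : 0 < Th1 -> nondecreasing D -> continuity p ->
  (forall t, -1 <= t <= Th1 -> Rabs (p t) <= M) ->
  forall w, Rabs (Xi Th1 D p w) <= M * (D Th1 - D (-1)).
Proof.
  intros HT HD Hp HM w. unfold Xi. apply mint_bound; try lra; auto.
  - apply c_i; auto.
  - intros t Ht. specialize (HM t Ht).
    set (u := w * t).
    assert (HDu : Den w t = 1 + u * u) by (unfold Den, u; ring).
    set (v := u / Den w t).
    assert (Hv : Rabs v <= 1).
    { assert (E : u = v * (1 + u*u)) by (unfold v; rewrite HDu; field; nra).
      assert (Hp1 : 0 < 1 + u*u) by nra.
      apply Rabs_le. split.
      - destruct (Rle_dec (-1) v) as [ok|nok]; auto.
        assert (0 < (-1 - v) * (1 + u*u)) by (apply Rmult_lt_0_compat; lra). nra.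
      - destruct (Rle_dec v 1) as [ok|nok]; auto.
        assert (0 < (v - 1) * (1 + u*u)) by (apply Rmult_lt_0_compat; lra). nra. }
    replace (p t * u / Den w t) with (p t * v) by (unfold v; field; apply Den_nz).
    rewrite Rabs_mult. pose proof (Rabs_pos (p t)). pose proof (Rabs_pos v). nra.
Qed.

Lemma sum_lb (f g : R -> R) (b c d m eta : R) :
  nondecreasing g -> 0 <= m -> 0 <= eta -> 0 < d ->
  (forall t, c <= t -> m <= f t) ->
  (forall x0 t x1, x0 <= t <= x1 -> x1 - x0 < d -> -eta * (g x1 - g x0) <= f t * (g x1 - g x0)) ->
  forall l x0, tagged_part x0 l b d ->
  m * (g b - g (Rmax x0 (c+d))) - eta * (g b - g x0) <= rs_sum f g x0 l.
Proof.
  intros Hg Hm He Hd Hf1 Hf2 l. induction l as [|[t x1] l IH]; simpl; intros x0 Hl.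
  - subst. assert (g b <= g (Rmax b (c+d))) by (apply Hg; apply Rmax_l). nra.
  - destruct Hl as (H1 & H2 & H3 & H4). specialize (IH x1 H4).
    assert (HD : 0 <= g x1 - g x0) by (pose proof (Hg x0 x1); lra).
    assert (T : m * (g (Rmax x1 (c+d)) - g (Rmax x0 (c+d))) - eta * (g x1 - g x0) <= f t * (g x1 - g x0)).
    { destruct (Rle_dec c x0) as [Hc|Hc].
      - assert (m * (g x1 - g x0) <= f t * (g x1 - g x0)) by (apply Rmult_le_compat_r; auto; apply Hf1; lra).
        assert (g (Rmax x1 (c+d)) - g (Rmax x0 (c+d)) <= g x1 - g x0).
        { unfold Rmax. destruct (Rle_dec x1 (c+d)); destruct (Rle_dec x0 (c+d)); try lra.
          pose proof (Hg x0 (c+d)); lra. }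
        assert (m * (g (Rmax x1 (c+d)) - g (Rmax x0 (c+d))) <= m * (g x1 - g x0)) by (apply Rmult_le_compat_l; auto).
        nra.
      - rewrite (Rmax_right x1), (Rmax_right x0) by lra.
        specialize (Hf2 x0 t x1 ltac:(lra) ltac:(lra)). lra. }
    lra.
Qed.

Lemma RS_pos f G Th1 I c m e :
  0 < Th1 -> nondecreasing G -> (forall x, x <= 0 -> G x = 0) -> (forall x, Th1 <= x -> G x = 1) ->
  is_RS f G (-1) Th1 I -> 0 < c -> 0 < m -> 0 <= e ->
  (forall y, 0 <= y <= 2*c -> G y <= 1/2) ->
  (forall t, c <= t -> m <= f t) ->
  (forall d, 0 < d -> forall x0 t x1, x0 <= t <= x1 -> x1 - x0 < d -> -(e*d)*(G x1 - G x0) <= f t * (G x1 - G x0)) ->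
  0 < I.
Proof.
  intros HT Hg HG0 HG1 HI Hc Hm He Hhalf Hf1 Hf2.
  destruct (HI (m/8) ltac:(lra)) as [d0 [Hd0 P]].
  set (d := Rmin d0 (Rmin c (m / (8 * (e+1))))).
  assert (Hd : 0 < d) by (unfold d; repeat apply Rmin_pos; auto; apply Rdiv_lt_0_compat; lra).
  assert (Hdd0 : d <= d0) by apply Rmin_l.
  assert (Hdc : d <= c) by (unfold d; eapply Rle_trans; [apply Rmin_r|apply Rmin_l]).
  assert (Hdm : d <= m / (8 * (e+1))) by (unfold d; eapply Rle_trans; [apply Rmin_r|apply Rmin_r]).
  destruct (part_exists (-1) Th1 d ltac:(lra) Hd) as [l Hl].
  pose proof (sum_lb f G Th1 c d m (e*d) Hg ltac:(lra) ltac:(nra) Hd Hf1 (Hf2 d Hd) l (-1) Hl) as S.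
  rewrite Rmax_right in S by lra.
  rewrite (HG1 Th1) in S by lra. rewrite (HG0 (-1)) in S by lra.
  specialize (Hhalf (c+d) ltac:(lra)).
  specialize (P l (tp_mono _ _ _ _ _ Hdd0 Hl)).
  assert (E1 : e * d <= m/8).
  { assert (e * d <= e * (m / (8 * (e+1)))) by (apply Rmult_le_compat_l; auto).
    assert (e * (m / (8 * (e + 1))) <= m/8).
    { apply (Rmult_le_reg_r (8*(e+1))); [lra|].
      replace (e * (m / (8 * (e + 1))) * (8 * (e + 1))) with (e*m) by (field; lra). nra. }
    lra. }
  assert (m * (1 - G (c + d)) >= m/2) by nra.
  revert P. split_Rabs; nra.
Qed.

Fixpoint sumn (f : nat -> R) (n : nat) : R :=
  match n with O => 0 | S n' => sumn f n' + f n' end.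

Lemma sumn_ext f g n : (forall k, (k < n)%nat -> f k = g k) -> sumn f n = sumn g n.
Proof. induction n; intros H; simpl; auto. rewrite IHn, H; auto. Qed.

Lemma sumn_lin f g al be n : sumn (fun k => al * f k + be * g k) n = al * sumn f n + be * sumn g n.
Proof. induction n; simpl; [ring|]. rewrite IHn; ring. Qed.

Lemma sumn_sfr f n : sum_f_R0 f n = sumn f (S n).
Proof. induction n; simpl; [ring|]. rewrite IHn. simpl. ring. Qed.

Definition bnd (f : R -> R) := exists M, forall w, Rabs (f w) <= M.

Lemma bnd_const c : bnd (fun _ => c).
Proof. exists (Rabs c); intros; lra. Qed.
Lemma bnd_plus f g : bnd f -> bnd g -> bnd (fun w => f w + g w).
Proof. intros [M1 H1] [M2 H2]. exists (M1+M2). intro w. eapply Rle_trans; [apply Rabs_triang|].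
  specialize (H1 w); specialize (H2 w); lra. Qed.
Lemma bnd_minus f g : bnd f -> bnd g -> bnd (fun w => f w - g w).
Proof. intros [M1 H1] [M2 H2]. exists (M1+M2). intro w. eapply Rle_trans; [apply Rabs_triang|].
  rewrite Rabs_Ropp. specialize (H1 w); specialize (H2 w); lra. Qed.
Lemma bnd_mult f g : bnd f -> bnd g -> bnd (fun w => f w * g w).
Proof. intros [M1 H1] [M2 H2]. exists (M1*M2). intro w. rewrite Rabs_mult.
  apply Rmult_le_compat; auto; apply Rabs_pos. Qed.
Lemma bnd_sumn (F : nat -> R -> R) n : (forall k, bnd (F k)) -> bnd (fun w => sumn (fun k => F k w) n).
Proof. intros H. induction n; simpl. apply bnd_const. apply bnd_plus; auto. Qed.

Lemma lim0 (e c r : R) (g : R -> R) : 0 < r -> bnd g -> (forall w, 0 < w < r -> e = c + w * g w) -> e = c.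
Proof.
  intros Hr [M HM] H.
  destruct (Req_dec e c) as [E|NE]; auto. exfalso.
  set (del := Rabs (e - c)). assert (Hdel : 0 < del) by (apply Rabs_pos_lt; lra).
  set (M' := Rabs M + 1). assert (HM' : 0 < M') by (unfold M'; pose proof (Rabs_pos M); lra).
  set (w := Rmin (r/2) (del / (2 * M'))).
  assert (Hw : 0 < w) by (apply Rmin_pos; [lra| apply Rdiv_lt_0_compat; lra]).
  assert (Hwr : w < r) by (unfold w; eapply Rle_lt_trans; [apply Rmin_l|lra]).
  assert (Hw2 : w * M' <= del / 2).
  { apply (Rle_trans _ (del / (2*M') * M')).
    - apply Rmult_le_compat_r; [lra| apply Rmin_r].
    - right; field; lra. }
  specialize (H w (conj Hw Hwr)). specialize (HM w).
  assert (Hg : Rabs (g w) <= M') by (unfold M'; pose proof (Rle_abs M); lra).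
  assert (del = w * Rabs (g w)) by (unfold del; rewrite H; replace (c + w * g w - c) with (w * g w) by ring;
    rewrite Rabs_mult, Rabs_pos_eq; lra).
  assert (w * Rabs (g w) <= w * M') by (apply Rmult_le_compat_l; lra).
  lra.
Qed.

Definition pL (j : nat) := fun t : R => t ^ j * t.
Definition pS (k : nat) := fun t : R => t ^ k.

Lemma c_pL j : continuity (pL j).
Proof. unfold pL. apply c_mul; [apply c_pow|apply c_id]. Qed.
Lemma c_pS k : continuity (pS k).
Proof. unfold pS. apply c_pow. Qed.

Lemma Xr_ext Th1 D p q w : (forall t, p t = q t) -> Xr Th1 D p w = Xr Th1 D q w.
Proof. intros H. unfold Xr. apply mint_ext. intro; rewrite H; auto. Qed.
Lemma Xi_ext Th1 D p q w : (forall t, p t = q t) -> Xi Th1 D p w = Xi Th1 D q w.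
Proof. intros H. unfold Xi. apply mint_ext. intro; rewrite H; auto. Qed.

Lemma LI_id Th1 G j w : 0 < Th1 -> nondecreasing G ->
  Xi Th1 G (pL j) w = w * Xr Th1 G (pL (S j)) w.
Proof. intros. rewrite Xi_id; auto; [|apply c_pL]. f_equal. apply Xr_ext. intro; unfold pL; simpl; ring. Qed.
Lemma LR_id Th1 G j w : 0 < Th1 -> nondecreasing G ->
  Xr Th1 G (pL j) w = mu_lambda Th1 G j - w * Xi Th1 G (pL (S j)) w.
Proof. intros. rewrite Xr_id; auto; [|apply c_pL]. f_equal. f_equal. apply Xi_ext. intro; unfold pL; simpl; ring. Qed.
Lemma SI_id Th1 Sg k w : 0 < Th1 -> nondecreasing Sg ->
  Xi Th1 Sg (pS k) w = w * Xr Th1 Sg (pS (S k)) w.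
Proof. intros. rewrite Xi_id; auto; [|apply c_pS]. f_equal. apply Xr_ext. intro; unfold pS; simpl; ring. Qed.
Lemma SR_id Th1 Sg k w : 0 < Th1 -> nondecreasing Sg ->
  Xr Th1 Sg (pS k) w = mu_sigma Th1 Sg k - w * Xi Th1 Sg (pS (S k)) w.
Proof. intros. rewrite Xr_id; auto; [|apply c_pS]. f_equal. f_equal. apply Xi_ext. intro; unfold pS; simpl; ring. Qed.

Lemma pow_bnd_abs t Mb n : Rabs t <= Mb -> Rabs (t ^ n) <= Mb ^ n.
Proof. intros H. rewrite <- RPow_abs. apply pow_maj_Rabs. rewrite Rabs_Rabsolu; auto. Qed.

Lemma bnd_X Th1 D p : 0 < Th1 -> nondecreasing D -> continuity p ->
  (exists M, forall t, -1 <= t <= Th1 -> Rabs (p t) <= M) ->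
  bnd (Xr Th1 D p) /\ bnd (Xi Th1 D p).
Proof.
  intros HT HD Hp [M HM]. split; exists (M * (D Th1 - D (-1))); intro w.
  - apply Xr_bnd; auto.
  - apply Xi_bnd; auto.
Qed.

Lemma pL_bnd Th1 j : 0 < Th1 -> exists M, forall t, -1 <= t <= Th1 -> Rabs (pL j t) <= M.
Proof.
  intros HT. exists ((1+Th1)^j * (1+Th1)). intros t Ht. unfold pL.
  assert (Ha : Rabs t <= 1 + Th1) by (split_Rabs; lra).
  rewrite Rabs_mult. apply Rmult_le_compat; auto; try apply Rabs_pos. apply pow_bnd_abs; auto.
Qed.
Lemma pS_bnd Th1 k : 0 < Th1 -> exists M, forall t, -1 <= t <= Th1 -> Rabs (pS k t) <= M.
Proof.
  intros HT. exists ((1+Th1)^k). intros t Ht. unfold pS.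
  assert (Ha : Rabs t <= 1 + Th1) by (split_Rabs; lra). apply pow_bnd_abs; auto.
Qed.


Lemma sumn_scal f c n : sumn (fun k => c * f k) n = c * sumn f n.
Proof. induction n; simpl; [ring|]. rewrite IHn; ring. Qed.

Definition Ur Th1 G Sg a q w :=
  a * Xr Th1 G (pL (S q)) w - sumn (fun k => mu_sigma Th1 Sg k * Xr Th1 G (pL (q - k)) w) q
   - (Xr Th1 Sg (pS q) w * Xr Th1 G (pL 0) w - Xi Th1 Sg (pS q) w * Xi Th1 G (pL 0) w).
Definition Ui Th1 G Sg a q w :=
  a * Xi Th1 G (pL (S q)) w - sumn (fun k => mu_sigma Th1 Sg k * Xi Th1 G (pL (q - k)) w) q
   - (Xr Th1 Sg (pS q) w * Xi Th1 G (pL 0) w + Xi Th1 Sg (pS q) w * Xr Th1 G (pL 0) w).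
Definition cc Th1 G Sg a q :=
  a * mu_lambda Th1 G (S q) - sumn (fun k => mu_sigma Th1 Sg k * mu_lambda Th1 G (q - k)) (S q).

Lemma U_rec_i Th1 G Sg a q w : 0 < Th1 -> nondecreasing G -> nondecreasing Sg ->
  Ui Th1 G Sg a q w = w * Ur Th1 G Sg a (S q) w.
Proof.
  intros HT HG HS. unfold Ur, Ui.
  set (s := mu_sigma Th1 Sg).
  assert (A1: Xi Th1 G (pL (S q)) w = w * Xr Th1 G (pL (S (S q))) w) by (apply LI_id; auto).
  assert (A2: sumn (fun k => s k * Xi Th1 G (pL (q-k)) w) (S q) = w * sumn (fun k => s k * Xr Th1 G (pL (S q - k)) w) (S q)).
  { rewrite <- sumn_scal. apply sumn_ext. intros k Hk.
    replace (S q - k)%nat with (S (q - k)) by lia. rewrite LI_id; auto. ring. }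
  assert (A3: Xi Th1 Sg (pS q) w = w * Xr Th1 Sg (pS (S q)) w) by (apply SI_id; auto).
  assert (A4: Xr Th1 Sg (pS q) w = s q - w * Xi Th1 Sg (pS (S q)) w) by (apply SR_id; auto).
  assert (A5: sumn (fun k => s k * Xi Th1 G (pL (q-k)) w) (S q) = sumn (fun k => s k * Xi Th1 G (pL (q-k)) w) q + s q * Xi Th1 G (pL 0) w)
    by (simpl; rewrite Nat.sub_diag; auto).
  rewrite A2 in A5.
  rewrite A1, A3, A4.
  assert (A6 : sumn (fun k => s k * Xi Th1 G (pL (q-k)) w) q = w * sumn (fun k => s k * Xr Th1 G (pL (S q - k)) w) (S q) - s q * Xi Th1 G (pL 0) w) by lra.
  rewrite A6. ring.
Qed.

Lemma U_rec_r Th1 G Sg a q w : 0 < Th1 -> nondecreasing G -> nondecreasing Sg ->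
  Ur Th1 G Sg a q w = cc Th1 G Sg a q - w * Ui Th1 G Sg a (S q) w.
Proof.
  intros HT HG HS. unfold Ur, Ui, cc.
  set (s := mu_sigma Th1 Sg).
  assert (B1: Xr Th1 G (pL (S q)) w = mu_lambda Th1 G (S q) - w * Xi Th1 G (pL (S (S q))) w) by (apply LR_id; auto).
  assert (B2: Xr Th1 Sg (pS q) w = s q - w * Xi Th1 Sg (pS (S q)) w) by (apply SR_id; auto).
  assert (B3: Xi Th1 Sg (pS q) w = w * Xr Th1 Sg (pS (S q)) w) by (apply SI_id; auto).
  assert (B4: sumn (fun k => s k * Xr Th1 G (pL (q-k)) w) (S q) =
              1 * sumn (fun k => s k * mu_lambda Th1 G (q-k)) (S q) + (-w) * sumn (fun k => s k * Xi Th1 G (pL (S q - k)) w) (S q)).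
  { rewrite <- sumn_lin. apply sumn_ext. intros k Hk.
    replace (S q - k)%nat with (S (q - k)) by lia. rewrite LR_id; auto. ring. }
  assert (B5: sumn (fun k => s k * Xr Th1 G (pL (q-k)) w) (S q) = sumn (fun k => s k * Xr Th1 G (pL (q-k)) w) q + s q * Xr Th1 G (pL 0) w)
    by (simpl; rewrite Nat.sub_diag; auto).
  rewrite B4 in B5.
  rewrite B1, B2, B3.
  assert (B6 : sumn (fun k => s k * Xr Th1 G (pL (q-k)) w) q =
     1 * sumn (fun k => s k * mu_lambda Th1 G (q-k)) (S q) + (-w) * sumn (fun k => s k * Xi Th1 G (pL (S q - k)) w) (S q) - s q * Xr Th1 G (pL 0) w) by lra.
  rewrite B6. ring.
Qed.

Lemma bnd_L Th1 G j : 0 < Th1 -> nondecreasing G -> bnd (fun w => Xr Th1 G (pL j) w) /\ bnd (fun w => Xi Th1 G (pL j) w).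
Proof. intros. apply bnd_X; auto. apply c_pL. apply pL_bnd; auto. Qed.
Lemma bnd_S Th1 Sg k : 0 < Th1 -> nondecreasing Sg -> bnd (fun w => Xr Th1 Sg (pS k) w) /\ bnd (fun w => Xi Th1 Sg (pS k) w).
Proof. intros. apply bnd_X; auto. apply c_pS. apply pS_bnd; auto. Qed.

Lemma bnd_U Th1 G Sg a q : 0 < Th1 -> nondecreasing G -> nondecreasing Sg ->
  bnd (Ur Th1 G Sg a q) /\ bnd (Ui Th1 G Sg a q).
Proof.
  intros HT HG HS. unfold Ur, Ui.
  pose proof (fun j => bnd_L Th1 G j HT HG) as BL.
  pose proof (fun k => bnd_S Th1 Sg k HT HS) as BS.
  split; (apply bnd_minus; [apply bnd_minus|]).
  - apply bnd_mult; [apply bnd_const| apply BL].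
  - apply (bnd_sumn (fun k w => mu_sigma Th1 Sg k * Xr Th1 G (pL (q - k)) w)). intro k.
    apply bnd_mult; [apply bnd_const| apply BL].
  - apply bnd_minus; apply bnd_mult; first [apply BL | apply BS].
  - apply bnd_mult; [apply bnd_const| apply BL].
  - apply (bnd_sumn (fun k w => mu_sigma Th1 Sg k * Xi Th1 G (pL (q - k)) w)). intro k.
    apply bnd_mult; [apply bnd_const| apply BL].
  - apply bnd_plus; apply bnd_mult; first [apply BL | apply BS].
Qed.

Lemma U_all Th1 G Sg a r : 0 < Th1 -> nondecreasing G -> nondecreasing Sg -> 0 < r ->
  (forall w, 0 < w < r -> Ur Th1 G Sg a 0 w = 0 /\ Ui Th1 G Sg a 0 w = 0) ->
  forall q, cc Th1 G Sg a q = 0 /\ (forall w, 0 < w < r -> Ur Th1 G Sg a (S q) w = 0 /\ Ui Th1 G Sg a (S q) w = 0).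
Proof.
  intros HT HG HS Hr H0.
  assert (step : forall q, (forall w, 0 < w < r -> Ur Th1 G Sg a q w = 0 /\ Ui Th1 G Sg a q w = 0) ->
     cc Th1 G Sg a q = 0 /\ (forall w, 0 < w < r -> Ur Th1 G Sg a (S q) w = 0 /\ Ui Th1 G Sg a (S q) w = 0)).
  { intros q Hq.
    assert (Hc : cc Th1 G Sg a q = 0).
    { apply (lim0 _ 0 r (Ui Th1 G Sg a (S q))); auto.
      - apply bnd_U; auto.
      - intros w Hw. destruct (Hq w Hw) as [E1 E2]. rewrite U_rec_r in E1; auto. lra. }
    split; auto. intros w Hw. destruct (Hq w Hw) as [E1 E2].
    rewrite U_rec_r in E1; auto. rewrite U_rec_i in E2; auto.
    rewrite Hc in E1. split.
    - apply (Rmult_eq_reg_l w); lra.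
    - apply (Rmult_eq_reg_l w); lra. }
  intro q. induction q.
  - apply step; auto.
  - apply step. apply IHq.
Qed.

Lemma Cmint_L Th1 G w : Cmint (fun th => Cdiv (RtoC th) (one_m_iwt w th)) G Th1 = mkC (Xr Th1 G (pL 0) w) (Xi Th1 G (pL 0) w).
Proof.
  unfold Cmint, Xr, Xi. f_equal; apply mint_ext; intro t;
  unfold Cdiv, Cmul, Cinv, RtoC, one_m_iwt, pL, Den; simpl; field;
  (split; [|]) || idtac.
  all: try (assert (0 <= w*w*(t*t)) by (apply Rmult_le_pos; nra); nra).
Qed.

Lemma Cmint_S Th1 Sg w : Cmint (fun t => Cinv (one_m_iwt w t)) Sg Th1 = mkC (Xr Th1 Sg (pS 0) w) (Xi Th1 Sg (pS 0) w).
Proof.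
  unfold Cmint, Xr, Xi. f_equal; apply mint_ext; intro t;
  unfold Cdiv, Cmul, Cinv, RtoC, one_m_iwt, pS, Den; simpl; field.
  all: try (assert (0 <= w*w*(t*t)) by (apply Rmult_le_pos; nra); nra).
Qed.

Lemma hyp_conv (Th1 F eta rhof phi nu a : R) (G Sg : R -> R) w :
  0 < F -> 0 < rhof -> nu = eta / rhof -> 0 < nu -> w <> 0 ->
  0 < Xr Th1 G (pL 0) w ->
  Tfun eta phi rhof nu F Th1 G w =
     Cadd (Cmul Ci (RtoC (a / w))) (Cmint (fun t => Cinv (one_m_iwt w t)) Sg Th1) ->
  F * phi = a * Xr Th1 G (pL 0) w + w * (Xr Th1 Sg (pS 0) w * Xi Th1 G (pL 0) w + Xi Th1 Sg (pS 0) w * Xr Th1 G (pL 0) w) /\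
  0 = a * Xi Th1 G (pL 0) w - w * (Xr Th1 Sg (pS 0) w * Xr Th1 G (pL 0) w - Xi Th1 Sg (pS 0) w * Xi Th1 G (pL 0) w).
Proof.
  intros HF Hr Hnu Hnu0 Hw HX H.
  unfold Tfun, Kfun in H. rewrite Cmint_L, Cmint_S in H.
  set (XL := Xr Th1 G (pL 0) w) in *. set (YL := Xi Th1 G (pL 0) w) in *.
  set (XS := Xr Th1 Sg (pS 0) w) in *. set (YS := Xi Th1 Sg (pS 0) w) in *.
  injection H as E1 E2.
  set (k1 := nu / F * XL) in *. set (k2 := nu / F * YL) in *.
  assert (Ek1 : k1 - 0 * YL = k1) by ring. assert (Ek2 : k2 + 0 * XL = k2) by ring.
  rewrite Ek1, Ek2 in E1, E2.
  set (N := k1 * (k1 * 1) + k2 * (k2 * 1)) in *.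
  set (c := eta * phi / (w * rhof)) in *.
  assert (Hk1 : 0 < k1) by (unfold k1; apply Rmult_lt_0_compat; [apply Rdiv_lt_0_compat|]; lra).
  assert (HN : 0 < N) by (unfold N; nra).
  assert (HXS : XS = c * k2 / N).
  { apply (Rplus_eq_reg_l (0*(a/w) - 1*0)). rewrite <- E1. field. lra. }
  assert (HYS : YS = c * k1 / N - a / w).
  { apply (Rplus_eq_reg_l (0*0 + 1*(a/w))). rewrite <- E2. field. lra. }
  assert (HNe : N = (nu/F)*(nu/F) * (XL * XL + YL * YL)) by (unfold N, k1, k2; ring).
  rewrite HXS, HYS. unfold c, k1, k2. split.
  - assert (HQ : 0 < XL * XL + YL * YL) by nra.
    rewrite HNe. clear - HQ HF Hr Hnu Hnu0 Hw. subst nu. field. repeat split; try lra.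
    intro E; rewrite E in Hnu0; unfold Rdiv in Hnu0; rewrite Rmult_0_l in Hnu0; lra.
  - apply (Rmult_eq_reg_r N); [|lra].
    assert (HN0 : N <> 0) by lra. clearbody N. clear - HN0 Hw Hr HF.
    field. repeat split; try lra.
Qed.

Theorem mainTheorem4 (Th1 F eta rhof phi nu a : R) (G S : R -> R) :
  0 < Th1 -> 0 < F -> 0 < eta -> 0 < rhof -> 0 < phi -> 0 < nu ->
  nu = eta / rhof ->
  (* G *)
  nondecreasing G -> right_continuous G ->
  (forall x, x <= 0 -> G x = 0) -> (forall x, Th1 <= x -> G x = 1) ->
  (* a >= 0 and sigma positive measure on [0,Th1], distribution function S *)
  0 <= a ->
  nondecreasing S -> right_continuous S ->
  (forall x, x < 0 -> S x = 0) -> (forall x, Th1 <= x -> S x = S Th1) ->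
  (* T(w) = a i / w + int_0^Th1 dsigma(t) / (1 - i w t) *)
  (forall w, w <> 0 ->
     Tfun eta phi rhof nu F Th1 G w =
     Cadd (Cmul Ci (RtoC (a / w))) (Cmint (fun t => Cinv (one_m_iwt w t)) S Th1)) ->
  let K0 := Kfun nu F Th1 G 0 in
  let ainf := phi * F in
  let muL := mu_lambda Th1 G in
  let muS := mu_sigma Th1 S in
  (* (i) *)
  (RtoC (muL 0%nat) = Cmul (RtoC (F / nu)) K0 /\
   RtoC (muL 0%nat) = Cmul (RtoC (ainf / (phi * nu))) K0) /\
  (* (ii) *)
  (forall p : nat, (1 <= p)%nat ->
     muL p = muL 0%nat / ainf *
             sum_f_R0 (fun k => muS k * muL (p - 1 - k)%nat) (p - 1)) /\
  (* (iii) *)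
  (muS 0%nat = ainf * muL 1%nat / (muL 0%nat) ^ 2 /\
   RtoC (muS 0%nat) =
     Cmul (Cdiv (RtoC (nu ^ 2 * phi)) (Cmul (Cmul K0 K0) (RtoC F))) (RtoC (muL 1%nat)) /\
   ainf = muS 0%nat * (muL 0%nat) ^ 2 / muL 1%nat).
Proof.
  intros HT HF Heta Hr Hphi Hnu Hnueq HGm HGrc HG0 HG1 Ha HSm HSrc HS0 HS1 Hhyp K0 ainf muL muS.
  assert (HT1 : -1 < Th1) by lra.
  destruct (HGrc 0 (1/2) ltac:(lra)) as [del [Hdel Hrc]].
  set (c := del/4).
  assert (Hc : 0 < c) by (unfold c; lra).
  assert (Hhalf : forall y, 0 <= y <= 2*c -> G y <= 1/2).
  { intros y Hy. specialize (Hrc y ltac:(unfold c in *; lra)). rewrite (HG0 0) in Hrc by lra.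
    revert Hrc; split_Rabs; lra. }
  assert (Hl0 : 0 < mu_lambda Th1 G 0).
  { apply (RS_pos (pL 0) G Th1 _ c c 1); auto; try lra.
    - apply mint_spec; auto. apply c_pL.
    - intros t Ht. unfold pL; simpl; lra.
    - intros d Hd x0 t x1 Hx Hd'. unfold pL; simpl.
      assert (HD : 0 <= G x1 - G x0) by (pose proof (HGm x0 x1); lra).
      destruct (Rle_dec 0 t).
      + nra.
      + destruct (Rle_dec x1 0).
        * rewrite (HG0 x1), (HG0 x0) by lra. lra.
        * assert (0 <= (t + d) * (G x1 - G x0)) by (apply Rmult_le_pos; lra). nra. }
  assert (Hl1 : 0 < mu_lambda Th1 G 1).
  { apply (RS_pos (pL 1) G Th1 _ c (c*c) 0); auto; try lra.
    - apply mint_spec; auto. apply c_pL.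
    - nra.
    - intros t Ht. unfold pL; simpl; nra.
    - intros d Hd x0 t x1 Hx Hd'. unfold pL; simpl.
      assert (HD : 0 <= G x1 - G x0) by (pose proof (HGm x0 x1); lra).
      assert (0 <= t * 1 * t) by nra. nra. }
  set (l0 := mu_lambda Th1 G 0) in *.
  destruct (proj2 (bnd_L Th1 G 1 HT HGm)) as [B HB].
  set (r := l0 / (Rabs B + 1)).
  assert (HBp : 0 < Rabs B + 1) by (pose proof (Rabs_pos B); lra).
  assert (Hr0 : 0 < r) by (unfold r; apply Rdiv_lt_0_compat; lra).
  assert (HXpos : forall w, 0 < w < r -> 0 < Xr Th1 G (pL 0) w).
  { intros w Hw. rewrite LR_id by auto. fold l0.
    specialize (HB w). pose proof (Rle_abs (Xi Th1 G (pL 1) w)). pose proof (Rle_abs B).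
    assert (w * Xi Th1 G (pL 1) w <= w * (Rabs B + 1)) by (apply Rmult_le_compat_l; lra).
    assert (w * (Rabs B + 1) < r * (Rabs B + 1)) by (apply Rmult_lt_compat_r; lra).
    assert (r * (Rabs B + 1) = l0) by (unfold r; field; lra).
    lra. }
  assert (HH : forall w, 0 < w < r ->
    F * phi = a * Xr Th1 G (pL 0) w + w * (Xr Th1 S (pS 0) w * Xi Th1 G (pL 0) w + Xi Th1 S (pS 0) w * Xr Th1 G (pL 0) w) /\
    0 = a * Xi Th1 G (pL 0) w - w * (Xr Th1 S (pS 0) w * Xr Th1 G (pL 0) w - Xi Th1 S (pS 0) w * Xi Th1 G (pL 0) w)).
  { intros w Hw. apply (hyp_conv Th1 F eta rhof phi nu a G S w); auto; try lra. apply Hhyp; lra. }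
  assert (Hfa : F * phi = a * l0).
  { apply (lim0 _ _ r (fun w => -1 * Ui Th1 G S a 0 w)); auto.
    - apply bnd_mult; [apply bnd_const| apply bnd_U; auto].
    - intros w Hw. destruct (HH w Hw) as [H1 _]. rewrite H1. unfold Ui. simpl sumn.
      replace (a * Xr Th1 G (pL 0) w) with (a * l0 - a * w * Xi Th1 G (pL 1) w) by (rewrite LR_id by auto; fold l0; ring).
      ring. }
  assert (HU0 : forall w, 0 < w < r -> Ur Th1 G S a 0 w = 0 /\ Ui Th1 G S a 0 w = 0).
  { intros w Hw. destruct (HH w Hw) as [H1 H2]. split.
    - apply (Rmult_eq_reg_l w); [|lra]. rewrite Rmult_0_r. unfold Ur. simpl sumn.
      replace (a * Xi Th1 G (pL 0) w) with (a * w * Xr Th1 G (pL 1) w) in H2 by (rewrite LI_id by auto; ring).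
      ring_simplify in H2. ring_simplify. lra.
    - apply (Rmult_eq_reg_l w); [|lra]. rewrite Rmult_0_r. unfold Ui. simpl sumn.
      replace (a * Xr Th1 G (pL 0) w) with (a * l0 - a * w * Xi Th1 G (pL 1) w) in H1 by (rewrite LR_id by auto; fold l0; ring).
      rewrite Hfa in H1. ring_simplify in H1. ring_simplify. lra. }
  pose proof (U_all Th1 G S a r HT HGm HSm Hr0 HU0) as HQ.
  assert (Hcc : forall q, cc Th1 G S a q = 0) by (intro q; apply (HQ q)).
  assert (Hane : a <> 0) by (intro E; rewrite E in Hfa; nra).
  assert (HK0 : K0 = mkC (nu/F * l0) 0).
  { unfold K0, Kfun. rewrite Cmint_L. rewrite (LR_id Th1 G 0 0), (LI_id Th1 G 0 0) by auto. fold l0.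
    unfold Cmul, RtoC; simpl. f_equal; ring. }
  unfold muL, muS, ainf. rewrite HK0. fold l0.
  assert (Hc0 := Hcc 0%nat). unfold cc in Hc0. simpl sumn in Hc0. fold l0 in Hc0.
  set (l1 := mu_lambda Th1 G 1) in *. set (s0 := mu_sigma Th1 S 0) in *.
  assert (Hs0 : s0 = a * l1 / l0).
  { apply (Rmult_eq_reg_r l0); [|lra]. unfold Rdiv. rewrite Rmult_assoc, Rinv_l, Rmult_1_r by lra. lra. }
  split; [split|split; [|split; [|split]]].
  - unfold Cmul, RtoC; simpl. f_equal; field; lra.
  - unfold Cmul, RtoC; simpl. f_equal; field; lra.
  - intros p Hp. destruct p as [|q]; [lia|].
    rewrite sumn_sfr. replace (Datatypes.S q - 1)%nat with q by lia.
    pose proof (Hcc q) as Hq. unfold cc in Hq.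
    replace (phi * F) with (a * l0) by lra.
    match goal with |- _ = _ * ?X => assert (EX : X = a * mu_lambda Th1 G (Datatypes.S q)) by lra end.
    rewrite EX. field. split; lra.
  - rewrite Hs0. replace (phi * F) with (a * l0) by lra. field. lra.
  - rewrite Hs0. unfold Cdiv, Cmul, Cinv, RtoC; simpl. f_equal.
    + replace a with (F * phi / l0) by (rewrite Hfa; field; lra). field. repeat split; try lra.
    + field. repeat split; lra.
  - rewrite Hs0. replace (phi * F) with (a * l0) by lra. field. lra.
Qed.
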